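(* Let $(A,\gamma)$ be a quasiordered set and let $\{\alpha_i\mid i\in I\}$ be a half-space realizer of $\gamma$ with $|I|\ge2$. Then there exists a family $(R_i)_{i\in I}$, indexed by the same set $I$, of linear extensions of the induced partial order $r_\gamma$ on $A/(\gamma\cap\gamma^{-1})$ such that $\bigcap_{i\in I}R_i=r_\gamma$.
   Context: A quasiorder on $A$ is a reflexive and transitive relation; $\Delta_A=\{(a,a)\mid a\in A\}$. A quasiorder $\alpha$ on $A$ is a half-space if there is a quasiorder $\beta$ on $A$ with $\alpha\cup\beta=A\times A$ and $\alpha\cap\beta=\Delta_A$. A half-space realizer of a quasiorder $\gamma$ on $A$ is a set $\{\alpha_i\mid i\in I\}$ of half-spaces on $A$ with $\bigcap_{i\in I}\alpha_i=\gamma$. For a quasiorder $\gamma$, $r_\gamma$ is the induced partial order on $A/(\gamma\cap\gamma^{-1})$: $([a],[b])\in r_\gamma$ iff $(a,b)\in\gamma$. *)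

(* Defs.v *)
Set Implicit Arguments.

Definition quasiorder (A : Type) (r : A -> A -> Prop) : Prop :=
  (forall a, r a a) /\ (forall a b c, r a b -> r b c -> r a c).

Definition half_space (A : Type) (alpha : A -> A -> Prop) : Prop :=
  quasiorder alpha /\
  exists beta : A -> A -> Prop,
    quasiorder beta /\
    (forall a b, alpha a b \/ beta a b) /\
    (forall a b, (alpha a b /\ beta a b) <-> a = b).

Definition half_space_realizer (A I : Type) (alpha : I -> A -> A -> Prop)
  (gamma : A -> A -> Prop) : Prop :=
  (forall i, half_space (alpha i)) /\
  (forall a b, (forall i, alpha i a b) <-> gamma a b).

Definition qclass (A : Type) (gamma : A -> A -> Prop) (a : A) : A -> Prop :=
  fun b => gamma a b /\ gamma b a.

Definition quot (A : Type) (gamma : A -> A -> Prop) : Type :=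
  { X : A -> Prop | exists a, X = qclass gamma a }.

Definition r_gamma (A : Type) (gamma : A -> A -> Prop) (X Y : quot gamma) : Prop :=
  exists a b, proj1_sig X = qclass gamma a /\ proj1_sig Y = qclass gamma b /\ gamma a b.

Definition partial_order (T : Type) (R : T -> T -> Prop) : Prop :=
  (forall x, R x x) /\
  (forall x y, R x y -> R y x -> x = y) /\
  (forall x y z, R x y -> R y z -> R x z).

Definition linear_extension (T : Type) (r R : T -> T -> Prop) : Prop :=
  partial_order R /\ (forall x y, R x y \/ R y x) /\ (forall x y, r x y -> R x y).

(* Main.v *)
Require Import Defs.
From mathcomp Require Import ssreflect ssrfun ssrbool classical_sets boolp.
From Stdlib Require Import Classical.

Set Implicit Arguments.
Section Szp.
Variables (T : Type) (P : T -> T -> Prop).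
Hypothesis HP : partial_order P.

Definition extR (X : set (T * T)) (x y : T) : Prop := P x y \/ X (x, y).
Definition Fam (X : set (T * T)) : Prop := partial_order (extR X).

Lemma fam_chain (F : set (set (T * T))) :
  subset F Fam -> total_on F subset ->
  Fam (bigcup F (fun X => X)).
Proof.
move=> FP Ftot.
have key : forall u v, extR (bigcup F (fun X => X)) u v ->
   P u v \/ exists2 X, F X & X (u, v).
  move=> u v [H|[X FX HX]]; [by left|by right; exists X].
have up : forall X u v, F X -> extR X u v -> extR (bigcup F (fun X => X)) u v.
  move=> X u v FX [H|H]; [by left|by right; exists X].
have common : forall u v w z, extR (bigcup F (fun X => X)) u v ->
   extR (bigcup F (fun X => X)) w z ->
   (P u v /\ P w z) \/ exists2 X, F X & (extR X u v /\ extR X w z).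
  move=> u v w z /key [H1|[X1 F1 H1]] /key [H2|[X2 F2 H2]].
  - by left.
  - by right; exists X2 => //; split; [left|right].
  - by right; exists X1 => //; split; [right|left].
  - right; case: (Ftot _ _ F1 F2) => S.
    + by exists X2 => //; split; right => //; apply: S.
    + by exists X1 => //; split; right => //; apply: S.
case: HP => Pr [Pa Pt].
split; [|split].
- by move=> x; left.
- move=> x y H1 H2; case: (common _ _ _ _ H1 H2) => [[p q]|[X FX [p q]]].
  + exact: Pa.
  + by case: (FP X FX) => _ [An _]; apply: An.
- move=> x y z H1 H2; case: (common _ _ _ _ H1 H2) => [[p q]|[X FX [p q]]].
  + by left; apply: Pt p q.
  + apply: (up X) => //; case: (FP X FX) => _ [_ Tr]; exact: Tr p q.
Qed.

Lemma szpilrajn : exists L, linear_extension P L.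
Proof.
have [X [FX Xmax]] := Zorn_bigcup fam_chain.
exists (extR X).
split; [exact FX|split; last by move=> x y H; left].
move=> x y; apply: NNPP => Hn.
have Nxy : ~ extR X x y by move=> H; apply: Hn; left.
have Nyx : ~ extR X y x by move=> H; apply: Hn; right.
pose B : set (T * T) := fun p => X p \/ (extR X p.1 x /\ extR X y p.2).
case: FX => Lr [La Lt].
apply: (Xmax B).
- split.
  + by move=> p Hp; left.
  + move=> S; have : B (x, y) by right; split; apply: Lr.
    move=> /S Hxy; apply: Nxy; by right.
- have eB : forall u v, extR B u v <-> extR X u v \/ (extR X u x /\ extR X y v).
    move=> u v; split.
    + by case=> [H|[H|H]]; [left; left|left; right|right].
    + by case=> [[H|H]|H]; [left|right; left|right; right].
  split; [|split].
  + by move=> u; left; case: HP.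
  + move=> u v /eB [H1|[H1 H1']] /eB [H2|[H2 H2']].
    * exact: La.
    * exfalso; apply: Nyx; apply: Lt H2' (Lt _ _ _ H1 H2).
    * exfalso; apply: Nyx; apply: Lt H1' (Lt _ _ _ H2 H1).
    * exfalso; apply: Nyx; apply: Lt H1' H2.
  + move=> u v w /eB [H1|[H1 H1']] /eB [H2|[H2 H2']]; apply/eB.
    * by left; apply: Lt H1 H2.
    * by right; split => //; apply: Lt H1 H2.
    * by right; split => //; apply: Lt H1' H2.
    * exfalso; apply: Nyx; apply: Lt H1' H2.
Qed.
End Szp.

Section HS.
Variables (A : Type) (al : A -> A -> Prop).
Hypothesis H : half_space al.

Definition lt x y := al x y /\ ~ al y x.
Definition tie x y := ~ lt x y /\ ~ lt y x.

Lemma al_refl x : al x x. Proof. by case: H => [[r _] _]. Qed.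
Lemma al_trans x y z : al x y -> al y z -> al x z.
Proof. by case: H => [[_ t] _]; apply: t. Qed.

Lemma cotrans x y z : x <> z -> al x z -> al x y \/ al y z.
Proof.
move=> nxz axz; apply: NNPP => Hn.
have n1 : ~ al x y by move=> h; apply: Hn; left.
have n2 : ~ al y z by move=> h; apply: Hn; right.
case: H => _ [be [[_ bt] [un it]]].
have bxy : be x y by case: (un x y).
have byz : be y z by case: (un y z).
apply: nxz; apply/it; split => //; exact: bt bxy byz.
Qed.

Lemma tie_sym x y : tie x y -> tie y x.
Proof. by case. Qed.

Lemma W2 a b c : lt a b -> tie b c -> lt a c.
Proof.
move=> [ab nba] [nbc ncb]; split.
- have nab : a <> b by move=> e; subst; apply: nba.
  case: (@cotrans a c b nab ab) => // acb.
  +  apply: NNPP => n; apply: ncb; split => //.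
    by move=> bc; apply: n; apply: al_trans ab bc.
- move=> ca; apply: nba.
  have cb : al c b by apply: al_trans ca ab.
  have bc : al b c by apply: NNPP => n; apply: ncb.
  exact: al_trans bc ca.
Qed.

Lemma W3 a b c : tie a b -> lt b c -> lt a c.
Proof.
move=> [nab nba] [bc ncb]; split.
- have nbc : b <> c by move=> e; subst; apply: ncb.
  case: (@cotrans b a c nbc bc) => // ba.
  have ab : al a b by apply: NNPP => n; apply: nba; split.
  exact: al_trans ab bc.
- move=> ca; apply: ncb.
  have ba : al b a by apply: al_trans bc ca.
  have ab : al a b by apply: NNPP => n; apply: nba; split.
  exact: al_trans ca ab.
Qed.

Lemma lt_trans a b c : lt a b -> lt b c -> lt a c.
Proof.
move=> [ab nba] [bc ncb]; split; first exact: al_trans ab bc.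
move=> ca; apply: ncb; exact: al_trans ca ab.
Qed.

Lemma lt_irr a : ~ lt a a. Proof. by case. Qed.

Lemma tie_trans a b c : tie a b -> tie b c -> tie a c.
Proof.
move=> tab tbc; split.
- move=> lac; case: tab => nab _; apply: nab; apply: W2 lac (tie_sym tbc).
- move=> lca; case: tbc => _ ncb; apply: ncb; apply: W2 lca tab.
Qed.

Lemma trich a b : lt a b \/ lt b a \/ tie a b.
Proof.
case: (classic (lt a b)) => h; first by left.
case: (classic (lt b a)) => h'; first by right; left.
by right; right.
Qed.

Lemma negtrans c a b : lt c a -> lt c b \/ lt b a.
Proof.
move=> lca; case: (trich a b) => [lab|[lba|tab]].
- left; exact: lt_trans lca lab.
- by right.
- left; exact: W2 lca tab.
Qed.

Lemma mix x y z : x <> y -> al x y -> al y x -> ~ al y z -> ~ al z y -> False.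
Proof.
move=> nxy axy ayx nyz nzy.
case: (cotrans z nxy axy) => [axz|azy] //.
apply: nyz; exact: al_trans ayx axz.
Qed.

Lemma bot_trans a b c : ~ al a b -> ~ al b a -> ~ al b c -> ~ al c b -> a <> c -> ~ al a c.
Proof.
move=> nab nba nbc ncb nac aac.
by case: (cotrans b nac aac).
Qed.
End HS.

Section Main.
Variables (A I : Type) (gamma : A -> A -> Prop) (alpha : I -> A -> A -> Prop).
Hypothesis Hq : quasiorder gamma.
Hypothesis Hhs : forall i, half_space (alpha i).
Hypothesis Hg : forall a b, (forall i, alpha i a b) <-> gamma a b.
Variables (i0 j0 : I).
Hypothesis Hij : i0 <> j0.
Variable M : A -> A -> Prop.
Hypothesis Mtot : forall a b, M a b \/ M b a.
Hypothesis Mtr : forall a b c, M a b -> M b c -> M a c.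
Hypothesis Mas : forall a b, M a b -> M b a -> gamma a b.
Hypothesis Meq : forall a b, gamma a b -> gamma b a -> M a b.

Definition rho a b := forall j, ~ lt (alpha j) b a.
Definition N i a b := (i = i0 -> M a b) /\ (i <> i0 -> M b a).
Definition QE i a b := rho a b /\ (rho b a -> N i a b).
Definition QA i a b := rho b a /\ (rho a b -> N i a b).
Definition K i a b := (alpha i a b -> QE i a b) /\ (~ alpha i a b -> QA i a b).
Definition C i a b := lt (alpha i) a b \/ (tie (alpha i) a b /\ K i a b).

Lemma Mrefl a : M a a. Proof. by case: (Mtot a a). Qed.
Lemma grefl a : gamma a a. Proof. by case: Hq. Qed.
Lemma gtr a b c : gamma a b -> gamma b c -> gamma a c.
Proof. by case: Hq => _ t; apply: t. Qed.

Lemma rho_refl a : rho a a. Proof. move=> j; exact: lt_irr. Qed.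
Lemma rho_trans a b c : rho a b -> rho b c -> rho a c.
Proof.
move=> r1 r2 j l; case: (negtrans (Hhs j) b l) => h.
- exact: (r2 j h).
- exact: (r1 j h).
Qed.
Lemma N_refl i a : N i a a. Proof. by split => _; apply: Mrefl. Qed.
Lemma N_trans i a b c : N i a b -> N i b c -> N i a c.
Proof.
move=> [n1 n2] [m1 m2]; split => h.
- exact: Mtr (n1 h) (m1 h).
- exact: Mtr (m2 h) (n2 h).
Qed.
Lemma QE_trans i a b c : QE i a b -> QE i b c -> QE i a c.
Proof.
move=> [r1 q1] [r2 q2]; split; first exact: rho_trans r1 r2.
move=> rca; apply: (N_trans (b:=b)).
- apply: q1; exact: rho_trans r2 rca.
- apply: q2; exact: rho_trans rca r1.
Qed.
Lemma QA_trans i a b c : QA i a b -> QA i b c -> QA i a c.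
Proof.
move=> [r1 q1] [r2 q2]; split; first exact: rho_trans r2 r1.
move=> rac; apply: (N_trans (b:=b)).
- apply: q1; exact: rho_trans rac r2.
- apply: q2; exact: rho_trans r1 rac.
Qed.
Lemma K_refl i a : K i a a.
Proof.
split => h; last by exfalso; apply: h; exact: (@al_refl _ _ (Hhs i) a).
split; first exact: rho_refl. move=> _; exact: N_refl.
Qed.

Lemma C_refl i a : C i a a.
Proof.
right; split; first by split; apply: lt_irr.
exact: K_refl.
Qed.

Lemma C_trans i a b c : C i a b -> C i b c -> C i a c.
Proof.
have hs := Hhs i.
move=> [l1|[t1 k1]] [l2|[t2 k2]].
- left; exact: lt_trans l1 l2.
- left; exact: W2 l1 t2.
- left; exact: W3 t1 l2.
- right; split; first exact: tie_trans t1 t2.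
  case: (classic (alpha i a b)) => hab; case: (classic (alpha i b c)) => hbc.
  + have hac : alpha i a c by apply: al_trans hab hbc.
    split => h //.
    apply: QE_trans; [exact: (proj1 k1) | exact: (proj1 k2)].
  + have e : a = b.
      have hba : alpha i b a by apply: NNPP => n'; apply: (proj1 t1); exact: (conj hab n').
      have hcb : ~ alpha i c b by move=> h; apply: (proj2 t2); exact: (conj h hbc).
      apply: NNPP => n; exact: (@mix _ _ hs a b c n hab hba hbc hcb).
    by subst.
  + have e : b = c.
      have hcb : alpha i c b by apply: NNPP => n'; apply: (proj1 t2); exact: (conj hbc n').
      have hba : ~ alpha i b a by move=> h; apply: (proj2 t1); exact: (conj h hab).
      apply: NNPP => n; exact: (@mix _ _ hs c b a (fun e => n (esym e)) hcb hbc hba hab).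
    by subst.
  + have nba : ~ alpha i b a by move=> h; apply: (proj2 t1); split.
    have ncb : ~ alpha i c b by move=> h; apply: (proj2 t2); split.
    case: (classic (a = c)) => ac; first by subst; apply: K_refl.
    have nac : ~ alpha i a c by exact: (bot_trans hs b hab nba hbc ncb ac).
    split => h //.
    apply: QA_trans; [exact: (proj2 k1) | exact: (proj2 k2)].
Qed.

Lemma C_anti i a b : C i a b -> C i b a -> gamma a b.
Proof.
move=> [l1|[t1 k1]] [l2|[t2 k2]].
- by case: l1 => _ h; case: l2.
- by case: t2 => _ h.
- by case: t1 => _ h.
- have fin : rho a b -> rho b a -> N i a b -> N i b a -> gamma a b.
    move=> _ _ [n1 n2] [m1 m2].
    case: (classic (i = i0)) => e.
    + exact: Mas (n1 e) (m1 e).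
    + apply: Mas (m2 e) (n2 e).
  case: (classic (alpha i a b)) => hab.
  + have hba : alpha i b a by apply: NNPP => n; apply: (proj1 t1).
    case: (proj1 k1 hab) => r1 q1; case: (proj1 k2 hba) => r2 q2.
    exact: fin r1 r2 (q1 r2) (q2 r1).
  + have hba : ~ alpha i b a by move=> h; apply: (proj2 t1).
    case: (proj2 k1 hab) => r1 q1; case: (proj2 k2 hba) => r2 q2.
    exact: fin r2 r1 (q1 r2) (q2 r1).
Qed.

Lemma gamma_C i a b : gamma a b -> C i a b.
Proof.
move=> g; have al := proj2 (Hg a b) g.
have rab : rho a b by move=> j [_ h]; apply: h; apply: al.
have Nab : rho b a -> N i a b.
  move=> rba.
  have gba : gamma b a.
    apply/Hg => j; apply: NNPP => n; apply: (rba j); by split; [apply: al|].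
  by split => _; apply: Meq.
case: (classic (alpha i b a)) => hba.
- right; split.
  + by split; move=> [_ h].
  + by split => h; [split | exfalso; apply: h].
- by left; split.
Qed.

Lemma witness a b : ~ gamma a b -> exists i, C i b a.
Proof.
move=> ng.
case: (classic (exists j, lt (alpha j) b a)) => [[j l]|nl].
  by exists j; left.
have rab : rho a b by move=> j l; apply: nl; exists j.
have [i ni] : exists i, ~ alpha i a b.
  apply: NNPP => n; apply: ng; apply/Hg => i; apply: NNPP => h; apply: n; by exists i.
have nba : ~ alpha i b a by move=> h; apply: nl; exists i; split.
case: (classic (rho b a)) => rba; last first.
  exists i; right; split.
  - by split; move=> [h _].
  - by split => h //; split.
have tj : forall j, tie (alpha j) b a by move=> j; split; [apply: rab|apply: rba].
have good : forall j, N j b a -> C j b a.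
  move=> j n; right; split => //; split => _; split => //.
case: (Mtot b a) => m.
- exists i0; apply: good; split => [_|h] //; by exfalso; apply: h.
- exists j0; apply: good; split => [h|_] //; by exfalso; apply: Hij; rewrite h.
Qed.
End Main.

Section Quot.
Variables (A : Type) (gamma : A -> A -> Prop).
Hypothesis Hq : quasiorder gamma.

Definition cls (a : A) : quot gamma :=
  exist _ (qclass gamma a) (ex_intro _ a erefl).

Lemma qgrefl a : gamma a a. Proof. by case: Hq. Qed.
Lemma qgtr a b c : gamma a b -> gamma b c -> gamma a c.
Proof. by case: Hq => _ t; apply: t. Qed.

Lemma qclass_eq a b : qclass gamma a = qclass gamma b -> gamma a b /\ gamma b a.
Proof.
move=> e; have : qclass gamma b b by split; apply: qgrefl.
by rewrite -e.
Qed.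

Lemma cls_eq a b : gamma a b -> gamma b a -> cls a = cls b.
Proof.
move=> hab hba; apply: eq_exist; apply: funext => x; apply: propext.
split; move=> [h1 h2]; split.
- exact: qgtr hba h1.
- exact: qgtr h2 hab.
- exact: qgtr hab h1.
- exact: qgtr h2 hba.
Qed.

Lemma cls_eq' a b : cls a = cls b -> gamma a b /\ gamma b a.
Proof. move=> e; apply: qclass_eq; exact: (f_equal (@proj1_sig _ _) e). Qed.

Lemma rep (X : quot gamma) : exists a, X = cls a.
Proof. case: X => S [a e]; subst; by exists a. Qed.

Definition liftR (Cr : A -> A -> Prop) (X Y : quot gamma) : Prop :=
  exists a b, proj1_sig X = qclass gamma a /\ proj1_sig Y = qclass gamma b /\ Cr a b.

Variable Cr : A -> A -> Prop.
Hypothesis Ctr : forall a b c, Cr a b -> Cr b c -> Cr a c.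
Hypothesis gC : forall a b, gamma a b -> Cr a b.
Hypothesis Can : forall a b, Cr a b -> Cr b a -> gamma a b.

Lemma lift_cls a b : liftR Cr (cls a) (cls b) <-> Cr a b.
Proof.
split.
- move=> [a' [b' [e1 [e2 c]]]].
  have [h1 _] := qclass_eq e1. have [_ h2] := qclass_eq e2.
  apply: Ctr (gC h1) _; exact: Ctr c (gC h2).
- by move=> c; exists a, b.
Qed.

Lemma lift_po : partial_order (liftR Cr).
Proof.
split; [|split].
- move=> X; have [a ->] := rep X; apply/lift_cls; exact: gC (qgrefl a).
- move=> X Y; have [a ->] := rep X; have [b ->] := rep Y.
  move=> /lift_cls h1 /lift_cls h2; apply: cls_eq; exact: Can.
- move=> X Y Z; have [a ->] := rep X; have [b ->] := rep Y; have [c ->] := rep Z.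
  move=> /lift_cls h1 /lift_cls h2; apply/lift_cls; exact: Ctr h1 h2.
Qed.
End Quot.

Lemma eq_po (T : Type) : partial_order (@eq T).
Proof. split; [by []|split; [by []|by move=> x y z -> ->]]. Qed.

Theorem theorem2p13 (A I : Type) (gamma : A -> A -> Prop)
  (alpha : I -> A -> A -> Prop) :
  quasiorder gamma ->
  half_space_realizer alpha gamma ->
  (exists i j : I, i <> j) ->
  exists R : I -> quot gamma -> quot gamma -> Prop,
    (forall i, linear_extension (@r_gamma A gamma) (R i)) /\
    (forall X Y, (forall i, R i X Y) <-> r_gamma X Y).
Proof.
move=> Hq [Hhs Hg] [i0 [j0 Hij]].
have [Lq [[Lr [La Lt]] [Ltot _]]] := szpilrajn (eq_po (quot gamma)).
pose M a b := Lq (cls gamma a) (cls gamma b).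
have Mtot : forall a b, M a b \/ M b a by move=> a b; apply: Ltot.
have Mtr : forall a b c, M a b -> M b c -> M a c by move=> a b c; apply: Lt.
have Mas : forall a b, M a b -> M b a -> gamma a b.
  move=> a b h1 h2; have := La _ _ h1 h2; move=> /(cls_eq' Hq) [] //.
have Meq : forall a b, gamma a b -> gamma b a -> M a b.
  move=> a b h1 h2; rewrite /M (cls_eq Hq _ _ h1 h2); exact: Lr.
pose Ci i := C alpha i0 M i.
have po : forall i, partial_order (@liftR A gamma (Ci i)).
  move=> i; apply: (@lift_po A gamma Hq (Ci i)).
  - move=> a b c; exact: (C_trans Hhs Mtot Mtr).
  - move=> a b; exact: (@gamma_C A I gamma alpha Hg i0 M Meq i _ _).
  - move=> a b; exact: (C_anti gamma Mas).
pose R i := proj1_sig (cid (szpilrajn (po i))).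
have RP : forall i, linear_extension (@liftR A gamma (Ci i)) (R i).
  move=> i; exact: (proj2_sig (cid (szpilrajn (po i)))).
have rsub : forall i X Y, r_gamma X Y -> @liftR A gamma (Ci i) X Y.
  move=> i X Y [a [b [e1 [e2 g]]]]; exists a, b; split => //; split => //.
  exact: (@gamma_C A I gamma alpha Hg i0 M Meq i _ _).
exists R; split.
- move=> i; have [p [t s]] := RP i; split => //; split => //.
  move=> X Y h; apply: s; exact: rsub.
- move=> X Y; split; last first.
    move=> h i; have [_ [_ s]] := RP i; apply: s; exact: rsub.
  move=> hR; apply: NNPP => nr.
  have [a ea] := rep X; have [b eb] := rep Y; subst X Y.
  have ng : ~ gamma a b by move=> g; apply: nr; exists a, b.
  have [i c] := witness gamma alpha Hg Hij M Mtot a b ng.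
  have [[_ [Ra _]] [_ s]] := RP i.
  have hYX : R i (cls gamma b) (cls gamma a).
    apply: s; apply/(@lift_cls A gamma Hq (Ci i)).
    + move=> x y z; exact: (C_trans Hhs Mtot Mtr).
    + move=> x y; exact: (@gamma_C A I gamma alpha Hg i0 M Meq i _ _).
    + exact: c.
  have e := Ra _ _ (hR i) hYX.
  apply: nr; rewrite e; exists b, b; split => //; split => //; exact: qgrefl.
Qed.
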